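(* Let $\mathbb G=V_1\times V_2$ be a step-two Carnot group of Métivier's type, i.e. for every $x\in V_1\setminus\{0\}$ the map $x'\in V_1\mapsto[x,x']\in V_2$ is surjective. Then $\mathcal A_h(\mathbb G)=\mathcal A(V_1\times V_2)$.
   Context: A step-two Carnot group is $\mathbb G=V_1\times V_2$ ($V_1,V_2$ finite-dimensional real vector spaces, $V_2\ne\{0\}$) with a bilinear skew-symmetric $[\cdot,\cdot]:V_1\times V_1\to V_2$ whose image spans $V_2$, and group law $(x,z)\cdot(x',z')=(x+x',z+z'+[x,x'])$. $\mathcal A_h(\mathbb G)$ is the space of maps $f:\mathbb G\to\mathbb R$ such that for all $(x,z)\in\mathbb G$, $y\in V_1$, $t\mapsto f((x,z)\cdot(ty,0))$ is affine; $\mathcal A(V_1\times V_2)$ is the space of maps affine in the usual sense on $V_1\times V_2$. *)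

(* Defs.v *)
From HB Require Import structures.
From mathcomp Require Import all_boot all_order all_algebra.
From mathcomp Require Import reals.
Set Implicit Arguments. Unset Strict Implicit. Unset Printing Implicit Defensive.
Import Order.TTheory GRing.Theory Num.Theory.
Local Open Scope ring_scope.

Section Carnot.
Variables (R : realType) (V1 V2 : vectType R).

Definition bilinear_br (br : V1 -> V1 -> V2) : Prop :=
  (forall x, linear (br x)) /\ (forall y, linear (fun x => br x y)).

Definition skew_br (br : V1 -> V1 -> V2) : Prop :=
  forall x y, br x y = - br y x.

Definition br_spans (br : V1 -> V1 -> V2) : Prop :=
  forall z : V2, exists n (c : 'I_n -> R) (xs ys : 'I_n -> V1),
    z = \sum_(i < n) c i *: br (xs i) (ys i).

Definition step_two_carnot (br : V1 -> V1 -> V2) : Prop :=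
  [/\ (exists z : V2, z != 0), bilinear_br br, skew_br br & br_spans br].

Definition gmul (br : V1 -> V1 -> V2) (p q : V1 * V2) : V1 * V2 :=
  (p.1 + q.1, p.2 + q.2 + br p.1 q.1).

Definition metivier (br : V1 -> V1 -> V2) : Prop :=
  forall x : V1, x != 0 -> forall z : V2, exists x' : V1, br x x' = z.

Definition affine_R (g : R -> R) : Prop :=
  exists a b : R, forall t, g t = a + b * t.

Definition h_affine (br : V1 -> V1 -> V2) (f : V1 * V2 -> R) : Prop :=
  forall (p : V1 * V2) (y : V1), affine_R (fun t => f (gmul br p (t *: y, 0))).

Definition linear_prod (L : V1 * V2 -> R) : Prop :=
  forall (a : R) (p q : V1 * V2),
    L (a *: p.1 + q.1, a *: p.2 + q.2) = a * L p + L q.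

Definition affine_prod (f : V1 * V2 -> R) : Prop :=
  exists (c : R) (L : V1 * V2 -> R), linear_prod L /\ forall p, f p = c + L p.

End Carnot.

(* Main.v *)
Require Import Defs.
From HB Require Import structures.
From mathcomp Require Import all_boot all_order all_algebra.
From mathcomp Require Import reals.
From mathcomp Require Import ring lra.
Set Implicit Arguments. Unset Strict Implicit. Unset Printing Implicit Defensive.
Import Order.TTheory GRing.Theory Num.Theory.
Local Open Scope ring_scope.
Section Gen.
Variable R : realType.

Lemma aff_ext (g h : R -> R) : (forall t, g t = h t) -> affine_R g -> affine_R h.
Proof. by move=> E [a [b H]]; exists a, b => t; rewrite -E H. Qed.

Lemma aff_val (g : R -> R) : affine_R g -> forall t, g t = g 0 + t * (g 1 - g 0).
Proof. by move=> [a [b H]] t; rewrite !H; ring. Qed.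

Lemma aff_add (g h : R -> R) : affine_R g -> affine_R h -> affine_R (fun t => g t + h t).
Proof. by move=> [a [b H]] [c [d K]]; exists (a + c), (b + d) => t; rewrite H K; ring. Qed.

Lemma aff_sub (g h : R -> R) : affine_R g -> affine_R h -> affine_R (fun t => g t - h t).
Proof. by move=> [a [b H]] [c [d K]]; exists (a - c), (b - d) => t; rewrite H K; ring. Qed.

Lemma aff_scale c (g : R -> R) : affine_R g -> affine_R (fun t => c * g t).
Proof. by move=> [a [b H]]; exists (c * a), (c * b) => t; rewrite H; ring. Qed.

Lemma aff_lin c d : affine_R (fun t : R => c + d * t).
Proof. by exists c, d. Qed.

Lemma half_mid (V : lmodType R) (z1 z2 : V) :
  z1 + 2^-1 *: (z2 - z1) = 2^-1 *: (z1 + z2).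
Proof.
have h : z1 = 2^-1 *: z1 + 2^-1 *: z1.
  have e : (2^-1 + 2^-1 : R) = 1.
    have h2 : (2 : R) != 0 by rewrite pnatr_eq0.
    by field.
  by rewrite -scalerDl e scale1r.
rewrite scalerBr scalerDr {1}h.
by rewrite -addrA [_ *: z1 + _]addrC addrA addrNK addrC.
Qed.

Lemma lemmaB (V : lmodType R) (phi : V -> R) :
  (forall z v, affine_R (fun l => phi (z + l *: v))) ->
  forall (a : R) z1 z2, phi (a *: z1 + z2) - phi 0 =
     a * (phi z1 - phi 0) + (phi z2 - phi 0).
Proof.
move=> H.
have hom : forall (l : R) z, phi (l *: z) - phi 0 = l * (phi z - phi 0).
  move=> l z; have := aff_val (H 0 z) l.
  by rewrite !add0r scale0r scale1r => ->; ring.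
have mid : forall z1 z2, phi (2^-1 *: (z1 + z2)) = phi z1 + 2^-1 * (phi z2 - phi z1).
  move=> z1 z2; have := aff_val (H z1 (z2 - z1)) 2^-1.
  rewrite half_mid => ->; rewrite scale0r scale1r addr0 [z1 + _]addrC subrK addrC.
  done.
have add : forall z1 z2, phi (z1 + z2) - phi 0 = (phi z1 - phi 0) + (phi z2 - phi 0).
  move=> z1 z2.
  have e : z1 + z2 = 2 *: (2^-1 *: (z1 + z2)).
    have e : (2 * 2^-1 : R) = 1.
      have h2 : (2 : R) != 0 by rewrite pnatr_eq0.
      by field.
    by rewrite scalerA e scale1r.
  rewrite e hom mid.
  have h2 : (2 : R) != 0 by rewrite pnatr_eq0.
  by field.
move=> a z1 z2; by rewrite add hom.
Qed.
End Gen.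
Section Main.
Variables (R : realType) (V1 V2 : vectType R) (br : V1 -> V1 -> V2).
Hypothesis Hl : forall x, linear (br x).
Hypothesis Hr : forall y, linear (fun x => br x y).

Lemma br0r x : br x 0 = 0.
Proof.
have h := Hl x 1 0 0. rewrite !scale1r in h. rewrite addr0 in h.
by move/(congr1 (fun w => w - br x 0)): h; rewrite subrr addrK => <-.
Qed.
Lemma br0l y : br 0 y = 0.
Proof.
have h := Hr y 1 0 0. rewrite !scale1r in h. rewrite addr0 in h.
by move/(congr1 (fun w => w - br 0 y)): h; rewrite subrr addrK => <-.
Qed.
Lemma brZr x a u : br x (a *: u) = a *: br x u.
Proof. have h := Hl x a u 0. by rewrite !addr0 br0r addr0 in h. Qed.
Lemma brZl y a u : br (a *: u) y = a *: br u y.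
Proof. have h := Hr y a u 0. by rewrite !addr0 br0l addr0 in h. Qed.
Lemma brDr x u v : br x (u + v) = br x u + br x v.
Proof. have h := Hl x 1 u v. by rewrite !scale1r in h. Qed.
Lemma brDl y u v : br (u + v) y = br u y + br v y.
Proof. have h := Hr y 1 u v. by rewrite !scale1r in h. Qed.
Lemma brNr x u : br x (- u) = - br x u.
Proof. by rewrite -scaleN1r brZr scaleN1r. Qed.
Lemma brNl y u : br (- u) y = - br u y.
Proof. by rewrite -scaleN1r brZl scaleN1r. Qed.

Variable f : V1 * V2 -> R.
Hypothesis hh : h_affine br f.

Lemma hh' x z y : affine_R (fun t => f (x + t *: y, z + t *: br x y)).
Proof.
apply: aff_ext (hh (x, z) y) => t.
by rewrite /gmul /= addr0 brZr.
Qed.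


Hypothesis Hmet : metivier br.
Hypothesis Hx0 : exists x0 : V1, x0 != 0.

Lemma VA x z w : affine_R (fun l => f (x, z + l *: w)).
Proof.
have [x0 nx0] := Hx0. have [y0 Hy0] := Hmet nx0 w.
have E : forall l, f (x, z + l*:w) = 2^-1 * (f (x + x0 + l *: y0, (z + br x x0) + l *: br (x + x0) y0) + f (x - x0 + l *: (-y0), (z - br x x0) + l *: br (x - x0) (-y0))).
  move=> l. have := aff_val (hh' x (z + l *: w) (x0 + l *: y0)) (-1).
  rewrite !scale0r !addr0 !scale1r !scaleN1r.
  have e1 : (x + (x0 + l *: y0), z + l *: w + br x (x0 + l *: y0)) =
            (x + x0 + l *: y0, z + br x x0 + l *: br (x + x0) y0).
    congr (_, _); first by rewrite addrA.
    rewrite brDr brZr brDl Hy0 scalerDr -!addrA; congr (_ + _).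
    by rewrite addrC -!addrA.
  have e2 : (x - (x0 + l *: y0), z + l *: w - br x (x0 + l *: y0)) =
            (x - x0 + l *: - y0, z - br x x0 + l *: br (x - x0) (- y0)).
    congr (_, _); first by rewrite opprD scalerN addrA.
    rewrite brNr brDl brNl Hy0 brDr brZr opprD opprB scalerBr -!addrA; congr (_ + _).
    by rewrite addrCA.
  rewrite e1 e2 => ->.
  have h2 : (2 : R) != 0 by rewrite pnatr_eq0.
  by field.
apply: aff_ext (aff_scale 2^-1 (aff_add (hh' _ _ y0) (hh' _ _ (-y0)))) => l.
by rewrite E.
Qed.


Definition fa x := f (x, 0).
Definition L x z := f (x, z) - f (x, 0).
Definition M x v := L x v - L 0 v.

Lemma LZ x (c : R) z1 z2 : L x (c *: z1 + z2) = c * L x z1 + L x z2.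
Proof. exact: (lemmaB (phi := fun z => f (x, z)) (VA x)). Qed.

Lemma LZs x (c : R) z : L x (c *: z) = c * L x z.
Proof. by have := LZ x c z 0; rewrite addr0 /L subrr addr0. Qed.

Lemma HL1 v x y : affine_R (fun t => L (x + t *: y) v).
Proof.
apply: aff_ext (aff_sub (hh' x v y) (hh' x 0 y)) => t.
have := LZ (x + t *: y) 1 v (t *: br x y).
rewrite scale1r mul1r /L add0r => h; lra.
Qed.

Lemma MX v (c : R) x1 x2 : M (c *: x1 + x2) v = c * M x1 v + M x2 v.
Proof. exact: (lemmaB (phi := fun x => L x v) (fun x y => HL1 v x y)). Qed.

Lemma MVs x (c : R) v : M x (c *: v) = c * M x v.
Proof. by rewrite /M !LZs; ring. Qed.

Lemma quad x y : affine_R (fun t => fa (x + t *: y) + t ^+ 2 * M y (br x y)).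
Proof.
apply: aff_ext (aff_sub (hh' x 0 y) (aff_lin 0 (L 0 (br x y) + M x (br x y)))) => t.
have e1 : f (x + t *: y, 0 + t *: br x y) = fa (x + t *: y) + L (x + t *: y) (t *: br x y).
  by rewrite /L /fa add0r; ring.
have e2 : L (x + t *: y) (br x y) = L 0 (br x y) + M (x + t *: y) (br x y).
  by rewrite /M; ring.
rewrite e1 LZs e2 [x + _]addrC MX; ring.
Qed.

Lemma hom_a l u : fa (l *: u) = fa 0 + l * (fa u - fa 0).
Proof.
have := aff_val (hh' 0 0 u) l.
by rewrite /fa br0l !scaler0 !add0r scale0r scale1r.
Qed.

Lemma m0 x y : M y (br x y) = 0.
Proof.
have [al [be Q1]] := quad x y.
have [al' [be' Q2]] := quad (2 *: x) y.
have Mb : M y (br (2 *: x) y) = 2 * M y (br x y) by rewrite brZl MVs.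
have key : forall t, fa (2 *: x + (2 * t) *: y) = fa 0 + 2 * (fa (x + t *: y) - fa 0).
  by move=> t; rewrite -hom_a scalerDr scalerA.
have q10 := Q1 0; have q11 := Q1 1; have q1m := Q1 (-1).
have q20 := Q2 (2 * 0); have q21 := Q2 (2 * 1); have q2m := Q2 (2 * (-1)).
have k0 := key 0; have k1 := key 1; have km := key (-1).
rewrite Mb in q20 q21 q2m.
lra.
Qed.


Hypothesis Hsk : skew_br br.

Lemma Mzero y v : M y v = 0.
Proof.
case: (eqVneq y 0) => [->|ny]; first by rewrite /M subrr.
have [x' hx'] := Hmet ny (- v).
have e : br x' y = v by rewrite Hsk hx' opprK.
by rewrite -e m0.
Qed.

Lemma aff_line x y : affine_R (fun t => fa (x + t *: y)).
Proof. by apply: aff_ext (quad x y) => t; rewrite Mzero mulr0 addr0. Qed.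

Lemma f_affine : affine_prod f.
Proof.
exists (fa 0), (fun p => (fa p.1 - fa 0) + L 0 p.2); split.
  move=> c p q /=.
  rewrite (lemmaB aff_line) LZ; ring.
case=> x z /=.
have := Mzero x z; rewrite /M /L /fa => h; lra.
Qed.

End Main.

Section Conv.
Variables (R : realType) (V1 V2 : vectType R) (br : V1 -> V1 -> V2).
Hypothesis Hl : forall x, linear (br x).

Lemma conv (f : V1 * V2 -> R) : affine_prod f -> h_affine br f.
Proof.
move=> [c [L [HL Hf]]] p y.
exists (c + L p), (L (y, br p.1 y)) => t.
rewrite Hf /gmul /= addr0 (brZr Hl) [p.1 + _]addrC [p.2 + _]addrC.
have := HL t (y, br p.1 y) p => /= ->.
by case: p => ? ? /=; ring.
Qed.
End Conv.

Unset Implicit Arguments.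

Theorem proposition6p1 (R : realType) (V1 V2 : vectType R)
    (br : V1 -> V1 -> V2) :
  step_two_carnot br -> metivier br ->
  forall f : V1 * V2 -> R, h_affine br f <-> affine_prod f.
Proof.
case=> [[z nz] [Hl Hr] Hsk Hsp] Hmet f; split; last exact: conv.
move=> hh.
have Hx0 : exists x0 : V1, x0 != 0.
  have [n [c [xs [ys E]]]] := Hsp z.
  case: (pickP (fun i => xs i != 0)) => [i hi | H0]; first by exists (xs i).
  move: nz; rewrite E big1 ?eqxx // => i _.
  have : xs i = 0 by apply/eqP; move: (H0 i) => /= /negbFE.
  by move=> ->; rewrite (br0l Hr) scaler0.
exact: (f_affine Hl Hr hh Hmet Hx0 Hsk).
Qed.
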